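(* Let $I$ be an instance of 2-SCSS-$(k,1)$ given by a directed graph $G=(V,E)$ with edge weights $\omega:E\to\mathbb{R}^{\geq 0}$ and terminals $s,t$, and let $I'$ be the Token Game constructed from $I$ as described in the context. Then $\mathrm{OPT}(I)\leq \mathrm{OPT}(I')$.
   Context: 2-SCSS-$(k,1)$: find $k$ paths $F_1,\dots,F_k$ from $s$ to $t$ and one path $B$ from $t$ to $s$ minimizing $\sum_{e\in E}\omega(e)\max\{|\{i: e\in F_i\}|,\ [e\in B]\}$; $\mathrm{OPT}(I)$ is this minimum. The Token Game $I'$: tokens $\mathbf{b},\mathbf{f}_1,\dots,\mathbf{f}_k$; states are vectors $\bar v=(v_0,v_1,\dots,v_k)\in V^{k+1}$ ($v_0$ the location of $\mathbf{b}$, $v_i$ that of $\mathbf{f}_i$); start state $(s,\dots,s)$, end state $(t,\dots,t)$. From each state $\bar v$ the moves are: (Backward) for each edge $(w,v_0)\in E$, move to the state obtained by replacing $v_0$ by $w$, at cost $\omega(w,v_0)$; (Forward) for each $i\in[k]$ and each edge $(v_i,x)\in E$, move to the state obtained by replacing $v_i$ by $x$, at cost $\omega(v_i,x)$; (Flip) for each $i\in[k]$, move to the state obtained by swapping $v_0$ and $v_i$ (new coordinate $0$ is $v_i$, new coordinate $i$ is $v_0$, others unchanged), at cost equal to the weight of a shortest $v_i\leadsto v_0$ path in $G$. $\mathrm{OPT}(I')$ is the minimum total cost of a sequence of moves from the start state to the end state. *)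

(* Defs.v *)
From HB Require Import structures.
From mathcomp Require Import all_boot all_order all_algebra.
From mathcomp Require Import all_classical all_reals ereal.
Set Implicit Arguments. Unset Strict Implicit. Unset Printing Implicit Defensive.
Import Order.TTheory GRing.Theory Num.Theory.
Local Open Scope classical_set_scope.
Local Open Scope ring_scope.

(* A path from u is a vertex sequence p with [path e u p]; it ends at [last u p]. *)

Definition edges_of (V : eqType) (u : V) (p : seq V) : seq (V * V) :=
  zip (u :: p) p.

Definition is_walk (V : finType) (e : rel V) (u v : V) (p : seq V) : bool :=
  path e u p && (last u p == v).

Definition walk_weight (R : realType) (V : finType) (w : V -> V -> R)
    (u : V) (p : seq V) : R :=
  \sum_(x <- edges_of u p) w x.1 x.2.

(* weight of a shortest u ~> v path in G (+oo if none) *)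
Definition sp_dist (R : realType) (V : finType) (e : rel V) (w : V -> V -> R)
    (u v : V) : \bar R :=
  ereal_inf [set c | exists p, is_walk e u v p /\ c = (walk_weight w u p)%:E].

Definition scss_cost (R : realType) (V : finType) (e : rel V) (w : V -> V -> R)
    (s t : V) (k : nat) (F : 'I_k -> seq V) (B : seq V) : R :=
  \sum_(x : V * V | e x.1 x.2)
     w x.1 x.2 *
     (maxn #|[set i : 'I_k | x \in edges_of s (F i)]| (x \in edges_of t B))%:R.

Definition OPT_scss (R : realType) (V : finType) (e : rel V) (w : V -> V -> R)
    (s t : V) (k : nat) : \bar R :=
  ereal_inf [set c | exists (F : 'I_k -> seq V) (B : seq V),
     [/\ forall i, is_walk e s t (F i), is_walk e t s B
       & c = (scss_cost e w s t F B)%:E]].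

(* states: vectors (v_0, v_1, ..., v_k); index 0 = token b, index i = token f_i *)
Definition state (V : finType) (k : nat) := {ffun 'I_k.+1 -> V}.

Definition upd (V : finType) (k : nat) (sv : state V k) (i : 'I_k.+1) (x : V)
  : state V k := [ffun j => if j == i then x else sv j].

Definition swap0 (V : finType) (k : nat) (sv : state V k) (i : 'I_k.+1)
  : state V k :=
  [ffun j => if j == ord0 then sv i else if j == i then sv ord0 else sv j].

Inductive tg_move (R : realType) (V : finType) (e : rel V) (w : V -> V -> R)
    (k : nat) : state V k -> state V k -> \bar R -> Prop :=
  | tg_backward (sv : state V k) (x : V) :
      e x (sv ord0) ->
      tg_move e w sv (upd sv ord0 x) (w x (sv ord0))%:E
  | tg_forward (sv : state V k) (i : 'I_k.+1) (x : V) :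
      i != ord0 -> e (sv i) x ->
      tg_move e w sv (upd sv i x) (w (sv i) x)%:E
  | tg_flip (sv : state V k) (i : 'I_k.+1) :
      i != ord0 ->
      tg_move e w sv (swap0 sv i) (sp_dist e w (sv i) (sv ord0)).

Inductive tg_run (R : realType) (V : finType) (e : rel V) (w : V -> V -> R)
    (k : nat) : state V k -> state V k -> \bar R -> Prop :=
  | tg_nil (sv : state V k) : tg_run e w sv sv 0%E
  | tg_cons (sv sv' sv'' : state V k) (c c' : \bar R) :
      tg_move e w sv sv' c -> tg_run e w sv' sv'' c' ->
      tg_run e w sv sv'' (c + c')%E.

Definition OPT_token (R : realType) (V : finType) (e : rel V) (w : V -> V -> R)
    (s t : V) (k : nat) : \bar R :=
  ereal_inf [set c | @tg_run R V e w k [ffun => s] [ffun => t] c].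

(* Main.v *)
Require Import Defs.
From HB Require Import structures.
From mathcomp Require Import all_boot all_order all_algebra.
From mathcomp Require Import all_classical all_reals ereal.
From mathcomp Require Import zify lra.
Import Order.TTheory GRing.Theory Num.Theory.
Local Open Scope ring_scope.
Set Implicit Arguments. Unset Strict Implicit.

Lemma edges_of_cat (V : eqType) (u : V) p q :
  edges_of u (p ++ q) = edges_of u p ++ edges_of (last u p) q.
Proof. by elim: p u => [|x p IH] u //=; rewrite /edges_of /= -IH. Qed.

Lemma edges_of_cons (V : eqType) (u x : V) p :
  edges_of u (x :: p) = (u, x) :: edges_of x p.
Proof. by []. Qed.

Lemma edges_of_path (V : finType) (e : rel V) u p y :
  path e u p -> y \in edges_of u p -> e y.1 y.2.
Proof.
elim: p u => [|x p IH] u //= /andP[eux pp].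
rewrite edges_of_cons inE => /orP[/eqP -> //|]; exact: IH.
Qed.

Lemma maxn_step (a b c d l : nat) :
  (a <= c + l -> b <= d + l -> maxn a b <= maxn c d + l)%N.
Proof. lia. Qed.

Lemma card_cl (T : finType) (P : pred T) :
  #|[set i | P i]%classic| = #|[set i | P i]%SET|.
Proof. apply: eq_card => i; rewrite inE; by rewrite unfold_in /= asboolb. Qed.

Lemma lift0_neq k (j : 'I_k) : (lift ord0 j == ord0) = false.
Proof. by rewrite eq_sym (negbTE (neq_lift _ _)). Qed.

Section S.
Variables (R : realType) (V : finType) (e : rel V) (w : V -> V -> R).
Hypothesis hw : forall u v, e u v -> 0 <= w u v.

Lemma sum_step (L : seq (V * V)) (a b : V * V -> nat) :
  (forall y, y \in L -> 0 <= w y.1 y.2) ->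
  (forall y, b y <= a y + (y \in L))%N ->
  \sum_(x : V * V | e x.1 x.2) w x.1 x.2 * (b x)%:R <=
  \sum_(x : V * V | e x.1 x.2) w x.1 x.2 * (a x)%:R + \sum_(y <- L) w y.1 y.2.
Proof.
elim: L a => [|y L IH] a hL hb.
  rewrite big_nil addr0; apply: ler_sum => x ex.
  apply: ler_wpM2l; first exact: hw.
  by rewrite ler_nat; have := hb x; rewrite in_nil addn0.
pose a' x := (a x + (x == y))%N.
apply: (le_trans (IH a' _ _)).
- by move=> z zL; apply: hL; rewrite inE zL orbT.
- move=> z; have := hb z; rewrite /a' inE; case: (z == y); case: (z \in L); rewrite /= ?addn0 ?addn1 ?addnS; lia.
rewrite big_cons addrA lerD2r.
have -> : \sum_(x : V * V | e x.1 x.2) w x.1 x.2 * (a' x)%:R =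
   \sum_(x : V * V | e x.1 x.2) w x.1 x.2 * (a x)%:R +
   \sum_(x : V * V | e x.1 x.2) w x.1 x.2 * (x == y)%:R.
  by rewrite -big_split /=; apply: eq_bigr => x _; rewrite /a' natrD mulrDr.
rewrite lerD2l.
have wy : 0 <= w y.1 y.2 by apply: hL; rewrite inE eqxx.
case ey: (e y.1 y.2).
  rewrite (bigD1 y) //= eqxx mulr1 big1 ?addr0 // => x /andP[_ /negbTE ->].
  by rewrite mulr0.
by rewrite big1 // => x ex; case: eqP => [xy|]; [rewrite xy ey in ex | rewrite mulr0].
Qed.

Lemma cost_step (k : nat) s h h' (F F' : 'I_k -> seq V) B B' L :
  (forall y, y \in L -> 0 <= w y.1 y.2) ->
  (forall y, #|[set i : 'I_k | y \in edges_of s (F' i)]%SET| <=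
             #|[set i : 'I_k | y \in edges_of s (F i)]%SET| + (y \in L))%N ->
  (forall y, (y \in edges_of h' B') <= (y \in edges_of h B) + (y \in L))%N ->
  scss_cost e w s h' F' B' <= scss_cost e w s h F B + \sum_(y <- L) w y.1 y.2.
Proof.
move=> hL hF hB; apply: sum_step => // y.
rewrite !card_cl; exact: maxn_step (hF y) (hB y).
Qed.

Lemma cnt_step (k : nat) s (F F' : 'I_k -> seq V) j0 (L : seq (V * V)) y :
  (forall j, j != j0 -> F' j = F j) ->
  (forall z, z \in edges_of s (F' j0) -> (z \in edges_of s (F j0)) || (z \in L)) ->
  (#|[set i : 'I_k | y \in edges_of s (F' i)]%SET| <=
   #|[set i : 'I_k | y \in edges_of s (F i)]%SET| + (y \in L))%N.
Proof.
move=> hF hj.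
case yL: (y \in L).
  apply: (leq_trans (n := #|(j0 |: [set i : 'I_k | y \in edges_of s (F i)])%SET|)).
    apply: subset_leq_card; apply/fintype.subsetP => j; rewrite !inE.
    by case: (eqVneq j j0) => [->|/hF ->] //= ->; rewrite orbT.
  by rewrite cardsU1 addnC leq_add2l leq_b1.
rewrite addn0; apply: subset_leq_card; apply/fintype.subsetP => j; rewrite !inE.
case: (eqVneq j j0) => [->|/hF -> //] /hj.
by rewrite yL orbF.
Qed.

Lemma walk_weight_ge0 u p : path e u p -> 0 <= walk_weight w u p.
Proof.
move=> pp; rewrite /walk_weight big_seq; apply: sumr_ge0 => y yp.
exact: hw (edges_of_path pp yp).
Qed.

Lemma sp_dist_ge0 u v : (0 <= sp_dist e w u v)%E.
Proof.
apply: le_ereal_inf_tmp => c [p [/andP[pp _] ->]].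
by rewrite lee_fin walk_weight_ge0.
Qed.

Lemma move_ge0 k sv sv' c : @tg_move R V e w k sv sv' c -> (0 <= c)%E.
Proof.
case=> [sv0 x ex|sv0 i x _ ex|sv0 i _]; rewrite ?lee_fin ?hw //.
exact: sp_dist_ge0.
Qed.

Lemma run_ge0 k sv sv' c : @tg_run R V e w k sv sv' c -> (0 <= c)%E.
Proof.
elim=> // ? ? ? ? ? /move_ge0 h _ h'; exact: adde_ge0.
Qed.

Definition rep k s (sv : state V k) (F : 'I_k -> seq V) (B : seq V) :=
  (forall j, is_walk e s (sv (lift ord0 j)) (F j)) /\ is_walk e (sv ord0) s B.

Lemma lift0_ex k (i : 'I_k.+1) : i != ord0 -> exists j0, i = lift ord0 j0.
Proof.
move=> i0; have hi : (i.-1 < k)%N by case: i i0 => [[|n] h] //=.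
exists (Ordinal hi); apply/val_inj; rewrite /= /bump /=.
by case: i i0 {hi} => [[|n] h].
Qed.

Lemma move_step k s sv sv' c F B (r : R) :
  @tg_move R V e w k sv sv' c -> rep s sv F B -> (c < r%:E)%E ->
  exists F' B', rep s sv' F' B' /\
    scss_cost e w s (sv' ord0) F' B' < scss_cost e w s (sv ord0) F B + r.
Proof.
case=> [sv0 x ex|sv0 i x i0 ex|sv0 i i0] [hF hB].
-
  rewrite lte_fin => hr.
  exists F, (sv0 ord0 :: B); split; first split.
  + by move=> j; rewrite ffunE lift0_neq.
  + by rewrite ffunE eqxx /is_walk /= ex.
  rewrite ffunE eqxx.
  apply: (le_lt_trans (cost_step (h := sv0 ord0) (F := F) (B := B) (L := [:: (x, sv0 ord0)]) _ _ _)).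
  + by move=> y; rewrite inE => /eqP ->; apply: hw.
  + by move=> y; apply: leq_addr.
  + by move=> y; rewrite edges_of_cons !inE; case: (y == _); case: (y \in edges_of _ _).
  by rewrite big_seq1 ltrD2l.
-
  rewrite lte_fin => hr.
  have [j0 ei] := lift0_ex i0.
  pose F' j := if j == j0 then rcons (F j0) x else F j.
  have hl : last s (F j0) = sv0 i by have /andP[_ /eqP] := hF j0; rewrite ei.
  exists F', B; split; first split.
  + move=> j; rewrite ffunE /F'; case: (eqVneq j j0) => [->|nj].
      rewrite -ei eqxx /is_walk rcons_path last_rcons eqxx andbT.
      by have /andP[-> _] := hF j0; rewrite hl.
    by rewrite ifN ?hF // ei; apply/eqP => /lift_inj /eqP; rewrite (negbTE nj).
  + by rewrite ffunE eq_sym (negbTE i0).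
  rewrite ffunE eq_sym (negbTE i0).
  apply: (le_lt_trans (cost_step (h := sv0 ord0) (F := F) (B := B) (L := [:: (sv0 i, x)]) _ _ _)).
  + by move=> y; rewrite inE => /eqP ->; apply: hw.
  + move=> y; apply: (cnt_step (j0 := j0)) => [j nj|z]; first by rewrite /F' (negbTE nj).
    by rewrite /F' eqxx -cats1 edges_of_cat mem_cat hl.
  + by move=> y; rewrite addnC leq_addl.
  by rewrite big_seq1 ltrD2l.
-
  move=> /ereal_inf_lt [c' [q [/andP[qp /eqP ql] ->]]]; rewrite lte_fin => hr.
  have [j0 ei] := lift0_ex i0.
  pose F' j := if j == j0 then F j0 ++ q else F j.
  have hl : last s (F j0) = sv0 i by have /andP[_ /eqP] := hF j0; rewrite ei.
  have sw0 : swap0 sv0 i ord0 = sv0 i by rewrite ffunE eqxx.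
  exists F', (q ++ B); split; first split.
  + move=> j; rewrite ffunE lift0_neq /F'.
    case: (eqVneq j j0) => [->|nj].
      rewrite -ei eqxx /is_walk cat_path last_cat hl ql eqxx qp andbT.
      by have /andP[-> _] := hF j0.
    rewrite ifN; first exact: hF.
    by rewrite ei; apply/eqP => /lift_inj /eqP; rewrite (negbTE nj).
  + rewrite sw0 /is_walk cat_path last_cat qp ql.
    exact: hB.
  rewrite sw0.
  apply: (le_lt_trans (cost_step (h := sv0 ord0) (F := F) (B := B) (L := edges_of (sv0 i) q) _ _ _)).
  + by move=> y yq; exact: hw (edges_of_path qp yq).
  + move=> y; apply: (cnt_step (j0 := j0)) => [j nj|z]; first by rewrite /F' (negbTE nj).
    by rewrite /F' eqxx edges_of_cat mem_cat hl.
  + move=> y; rewrite edges_of_cat mem_cat ql.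
    by case: (_ \in edges_of (sv0 i) q); case: (_ \in _).
  by rewrite ltrD2l.
Qed.

Lemma run_step k s sv sv'' c :
  @tg_run R V e w k sv sv'' c -> forall F B, rep s sv F B ->
  forall r : R, (c < r%:E)%E ->
  exists F' B', rep s sv'' F' B' /\
    scss_cost e w s (sv'' ord0) F' B' < scss_cost e w s (sv ord0) F B + r.
Proof.
elim=> [sv0 F B hr r|sv0 sv1 sv2 cm c' hm hrun IH F B hrep r].
  rewrite lte_fin => r0; exists F, B; split => //.
  by rewrite ltrDl.
have cm0 := move_ge0 hm; have c0 := run_ge0 hrun.
move: cm c' hm hrun IH cm0 c0 => [a| |] [b| |] // hm hrun IH a0 b0.
- rewrite -EFinD lte_fin => hab.
  have [F1 [B1 [hrep1 h1]]] := move_step (r := a + (r - a - b) / 2) hm hrep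
    ltac:(rewrite lte_fin; lra).
  have [F2 [B2 [hrep2 h2]]] := IH F1 B1 hrep1 (r - (a + (r - a - b) / 2))
    ltac:(rewrite lte_fin; lra).
  exists F2, B2; split => //; lra.
Qed.

End S.

Unset Implicit Arguments.

Theorem lemma5 (R : realType) (V : finType) (e : rel V) (w : V -> V -> R)
    (hw : forall u v, e u v -> 0 <= w u v) (s t : V) (k : nat) :
  (OPT_scss e w s t k <= OPT_token e w s t k)%E.
Proof.
apply: le_ereal_inf_tmp => c hc.
apply/lee_addgt0Pr => eps eps0.
have c0 := run_ge0 hw hc.
move: c c0 hc => [a| |] // a0 hc; last by rewrite leey.
have rep0 : rep e s [ffun => s] (fun _ : 'I_k => [::]) [::].
  by split => [j|]; rewrite ffunE /is_walk /= eqxx.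
have [F [B [[hF hB] h]]] := run_step hw hc rep0 (r := a + eps)
  ltac:(rewrite lte_fin; lra).
apply: (le_trans (ereal_inf_lbound _)).
  exists F, B; split; [move=> j; have := hF j; rewrite ffunE //|
                       by have := hB; rewrite ffunE|reflexivity].
have c0' : scss_cost e w s (([ffun => s] : state V k) ord0) (fun _ : 'I_k => [::]) [::] = 0.
  rewrite /scss_cost big1 // => x _.
  by rewrite card_cl /edges_of /= cards0 /= mulr0.
rewrite c0' add0r !ffunE in h.
by rewrite -EFinD lee_fin; apply: ltW.
Qed.
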